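(* Let $\mathcal{P}$ be a distribution on a sample space $\mathcal{S}$, $\Theta\subseteq\mathbb{R}^p$, $l$ a loss, $\mathcal{D}$ a distribution on $[0,1)$, $l_{\rm aug}(s,\theta)=\mathbb{E}_{\lambda\sim\mathcal{D}}[l(s_\lambda,\theta)]$, and $\theta_*=\arg\min_\theta\mathbb{E}_{s\sim\mathcal{P}}[l(s,\theta)]$. Assume the Disjointness assumption, and that for every $\epsilon>0$ there is $l'\in L^2(\mathcal{P})$ with $|l(s,\theta_1)-l(s,\theta_2)|\le l'(s)\|\theta_1-\theta_2\|$ for a.e. $s$ and all $\theta_1,\theta_2$ in the $\epsilon$-ball around $\theta_*$. Then for every $\epsilon>0$ there is $l'_{\rm aug}\in L^2(\mathcal{P})$ such that for a.e. $s$ and all $\theta_1,\theta_2$ in the $\epsilon$-ball around $\theta_*$, $|l_{\rm aug}(s,\theta_1)-l_{\rm aug}(s,\theta_2)|\le l'_{\rm aug}(s)\|\theta_1-\theta_2\|$.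
   Context: Samples $s=(x_0,\dots,x_d,y)$; RIM augmentation with $\lambda=(\lambda_1,\dots,\lambda_d)$, components i.i.d. from $\mathcal{D}$: $x_{0,\lambda_0}=x_0$, $x_{j,\lambda_j}=(1-\lambda_j)x_j+\lambda_jx_{j-1,\lambda_{j-1}}$, $s_\lambda=(x_{0,\lambda_0},\dots,x_{d,\lambda_d},y)$. Disjointness assumption: $\mathcal{S}$ is the disjoint countable union of measurable sets $S_1,S_2,\dots$, each the set of all possible augmentations of a sample, and for $s\in S_j$ and integrable $h$, $\mathbb{E}_{\lambda\sim\mathcal{D}}[h(s_\lambda)]=\mathbb{E}_{s'\sim\mathcal{P}}[h(s')\mid s'\in S_j]$. *)

(* Defs.v *)
From HB Require Import structures.
From mathcomp Require Import all_boot all_order all_algebra.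
From mathcomp Require Import all_classical all_reals all_analysis.
Set Implicit Arguments. Unset Strict Implicit. Unset Printing Implicit Defensive.
Import Order.TTheory GRing.Theory Num.Theory.
Import numFieldNormedType.Exports.
Local Open Scope classical_set_scope.
Local Open Scope ring_scope.

Definition enorm {R : realType} {p : nat} (v : 'rV[R]_p) : R :=
  Num.sqrt (\sum_(i < p) v 0 i ^+ 2).

Fixpoint rim {R : realType} {V : lmodType R} (x : nat -> V) (lam : nat -> R)
  (j : nat) : V :=
  match j with
  | 0 => x 0
  | j'.+1 => (1 - lam j'.+1) *: x j'.+1 + lam j'.+1 *: rim x lam j'
  end.

(* The RIM augmentation s_lambda of a sample s = (x_0,...,x_d,y), where the
   sample space S is identified with ('I_d.+1 -> V) * Y through
   [xf], [yf] (coordinates) and [mk] (constructor), and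
   lambda = (lambda_1,...,lambda_d) is the tuple t (lambda_k = tnth t (k-1)). *)
Definition rim_aug {R : realType} {V : lmodType R} {Y S : Type} {d : nat}
  (xf : S -> 'I_d.+1 -> V) (yf : S -> Y) (mk : ('I_d.+1 -> V) -> Y -> S)
  (s : S) (t : d.-tuple R) : S :=
  mk (fun j : 'I_d.+1 =>
        rim (fun k => xf s (inord k)) (fun k => nth 0 t k.-1) j)
     (yf s).

(* PL is the law of lambda = (lambda_1,...,lambda_d) with components i.i.d.
   with law D, i.e. PL is the d-fold product measure D^{\otimes d}
   (characterized on measurable rectangles). *)
Definition iid_law {R : realType} (d : nat) (D : probability R R)
  (PL : probability (d.-tuple R) R) : Prop :=
  forall A : 'I_d -> set R, (forall i, measurable (A i)) ->
    PL [set t | forall i, A i (tnth t i)] = (\prod_(i < d) D (A i))%E.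

Definition L2 {R : realType} {dS} {S : measurableType dS}
  (P : probability S R) (f : S -> R) : Prop :=
  measurable_fun setT f /\ (\int[P]_s ((f s) ^+ 2)%:E < +oo)%E.

Definition l_aug {R : realType} {d p : nat} {S : Type}
  (PL : probability (d.-tuple R) R) (aug : S -> d.-tuple R -> S)
  (l : S -> 'rV[R]_p -> R) (s : S) (th : 'rV[R]_p) : \bar R :=
  (\int[PL]_t (l (aug s t) th)%:E)%E.

(* Main.v *)
Require Import Defs.
From HB Require Import structures.
From mathcomp Require Import all_boot all_order all_algebra.
From mathcomp Require Import all_classical all_reals all_analysis.
Import Order.TTheory GRing.Theory Num.Theory.
Import numFieldNormedType.Exports.
Local Open Scope classical_set_scope.
Local Open Scope ring_scope.

From mathcomp Require Import measurable_realfun.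
From mathcomp Require Import lra.
Theorem proposition1
  (R : realType) (dS : measure_display) (S : measurableType dS)
  (P : probability S R)
  (V : lmodType R) (Y : Type) (d p : nat)
  (xf : S -> 'I_d.+1 -> V) (yf : S -> Y) (mk : ('I_d.+1 -> V) -> Y -> S)
  (Hmk : forall s, mk (xf s) (yf s) = s)
  (Hxf : forall f y, xf (mk f y) = f)
  (Hyf : forall f y, yf (mk f y) = y)
  (D : probability R R) (HD : D [set x : R | 0 <= x < 1] = 1%E)
  (PL : probability (d.-tuple R) R) (HPL : iid_law D PL)
  (Theta : set 'rV[R]_p) (l : S -> 'rV[R]_p -> R) (theta_star : 'rV[R]_p)
  (Hl_int : forall th, Theta th -> P.-integrable setT (fun s => (l s th)%:E))
  (Hstar : Theta theta_star /\
     forall th, Theta th ->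
       (\int[P]_s (l s theta_star)%:E <= \int[P]_s (l s th)%:E)%E)
  (J : set nat) (Sj : nat -> set S)
  (HSm : forall k, J k -> measurable (Sj k))
  (HSdisj : forall k k', J k -> J k' -> k <> k' -> Sj k `&` Sj k' = set0)
  (HScover : \bigcup_(k in J) Sj k = setT)
  (HSaug : forall k, J k -> exists s0 : S,
      Sj k = [set rim_aug xf yf mk s0 t |
               t in [set t : d.-tuple R | forall i, 0 <= tnth t i < 1]])
  (HScond : forall k, J k -> (0 < P (Sj k))%E ->
      forall s, Sj k s ->
      forall h : S -> R, P.-integrable setT (EFin \o h) ->
        (\int[PL]_t (h (rim_aug xf yf mk s t))%:E
         = ((fine (P (Sj k)))^-1)%:E * \int[P]_(x in Sj k) (h x)%:E)%E)
  (HLip : forall eps : R, 0 < eps -> exists l' : S -> R, L2 P l' /\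
      {ae P, forall s, forall th1 th2, Theta th1 -> Theta th2 ->
         enorm (th1 - theta_star) < eps -> enorm (th2 - theta_star) < eps ->
         `|l s th1 - l s th2| <= l' s * enorm (th1 - th2)}) :
  forall eps : R, 0 < eps -> exists l'aug : S -> R, L2 P l'aug /\
      {ae P, forall s, forall th1 th2, Theta th1 -> Theta th2 ->
         enorm (th1 - theta_star) < eps -> enorm (th2 - theta_star) < eps ->
         (`| l_aug PL (rim_aug xf yf mk) l s th1
             - l_aug PL (rim_aug xf yf mk) l s th2 |
          <= (l'aug s * enorm (th1 - th2))%:E)%E}.
Proof.
move=> eps eps0.
have [l' [[ml' l'2] ael']] := HLip eps eps0.
pose g := fun x => `|l' x|.
have mg : measurable_fun setT g.
  by apply: measurableT_comp => //; exact: normr_measurable.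
have mgE : measurable_fun setT (fun x => (g x)%:E) by apply/measurable_EFinP.
have ml'2 : measurable_fun setT (fun x => (l' x ^+ 2)%:E).
  by apply/measurable_EFinP; exact: measurable_funX.
have ig : P.-integrable setT (EFin \o g).
  apply/integrableP; split => //.
  apply: (@le_lt_trans _ _ (\int[P]_x ((1%:E + (l' x ^+ 2)%:E)))%E).
    apply: ge0_le_integral => //=.
    - by apply/measurable_EFinP; apply: measurableT_comp => //; exact: normr_measurable.
    - by apply: emeasurable_funD => //.
    - move=> x _; rewrite /g normr_id -EFinD lee_fin.
      rewrite -(real_normK (num_real (l' x))).
      have := normr_ge0 (l' x); nra.
  rewrite ge0_integralD //; last by move=> x _; rewrite lee_fin sqr_ge0.
  rewrite integral_cst // mul1e; apply: lte_add_pinfty => //.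
  by apply: (le_lt_trans (probability_le1 P measurableT)); rewrite ltry.
pose F := fun k => if `[< J k >] then Sj k else set0.
have mF : forall k, measurable (F k).
  by move=> k; rewrite /F; case: asboolP => // Jk; exact: HSm.
pose kof := fun s => xget 0%N [set k | J k /\ Sj k s].
have Hkof : forall s, J (kof s) /\ Sj (kof s) s.
  move=> s; apply: (@xgetPex _ 0%N [set k | J k /\ Sj k s]).
  have : (\bigcup_(k in J) Sj k) s by rewrite HScover.
  by case=> k Jk Sks; exists k.
have Huniq : forall s k, J k -> Sj k s -> kof s = k.
  move=> s k Jk Sks; have [J' S'] := Hkof s.
  case: (eqVneq (kof s) k) => // /eqP neq.
  have H := HSdisj _ _ J' Jk neq.
  have : (Sj (kof s) `&` Sj k) s by [].
  by rewrite H.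
pose pk := fun k => fine (P (Sj k)).
pose Gk := fun k => fine (\int[P]_(x in Sj k) (g x)%:E).
pose a := fun k => Gk k / pk k.
pose l'aug := fun s => a (kof s).
have cover : [set: S] = \bigcup_k F k.
  apply/seteqP; split => // s _; have [J' S'] := Hkof s.
  by exists (kof s) => //; rewrite /F asboolT.
have tF : trivIset setT F.
  move=> i j _ _ [x [Fi Fj]]; move: Fi Fj; rewrite /F.
  case: asboolP => // Ji Si; case: asboolP => // Jj Sj'.
  by rewrite -(Huniq _ _ Ji Si) -(Huniq _ _ Jj Sj').
have ml'aug : measurable_fun setT l'aug.
  move=> _ B mB; rewrite setTI.
  have -> : l'aug @^-1` B = \bigcup_k (F k `&` (fun _ => B (a k))).
    apply/seteqP; split => s.
    - rewrite /preimage /= => Bs; have [J' S'] := Hkof s.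
      by exists (kof s) => //; split => //; rewrite /F asboolT.
    - case=> k _ [+ Bk]; rewrite /F; case: asboolP => // Jk Sks.
      by rewrite /preimage /= /l'aug (Huniq _ _ Jk Sks).
  apply: bigcupT_measurable => k; apply: measurableI => //.
  case: (pselect (B (a k))) => Bk.
    by rewrite (_ : (fun _ => _) = setT) //; apply/seteqP; split.
  by rewrite (_ : (fun _ => _) = set0) //; apply/seteqP; split.
have ig' : forall k, J k -> P.-integrable (Sj k) (EFin \o g).
  by move=> k Jk; apply: integrableS ig => //; exact: HSm.
have Gfin : forall k, J k -> (\int[P]_(x in Sj k) (g x)%:E = (Gk k)%:E)%E.
  by move=> k Jk; rewrite fineK //; exact: (integrable_fin_num (HSm _ Jk) (ig' k Jk)).
have Pfin : forall k, J k -> P (Sj k) = (pk k)%:E.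
  by move=> k Jk; rewrite fineK //; exact: fin_num_measure _ _ (HSm _ Jk).
have pk0 : forall k, 0 <= pk k by move=> k; rewrite fine_ge0 // measure_ge0.
have a0 : forall k, 0 <= a k.
  move=> k; apply: divr_ge0 => //; rewrite fine_ge0 //.
  by apply: integral_ge0 => x _; rewrite lee_fin normr_ge0.
exists l'aug; split; first split => //.
  have ml'aug2 : measurable_fun setT (fun x => (l'aug x ^+ 2)%:E).
    by apply/measurable_EFinP; exact: measurable_funX.
  move: l'2; rewrite cover ge0_integral_bigcup //; first last.
  - by move=> x _; rewrite lee_fin sqr_ge0.
  - by rewrite -cover.
  rewrite ge0_integral_bigcup //; first last.
  - by move=> x _; rewrite lee_fin sqr_ge0.
  - by rewrite -cover.
  apply: le_lt_trans; apply: lee_nneseries => i _.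
    by move=> _; apply: integral_ge0 => x _; rewrite lee_fin sqr_ge0.
  rewrite /F; case: asboolP => Ji; last by rewrite !integral_set0.
  rewrite (eq_integral (fun _ => (a i ^+ 2)%:E)); last first.
    by move=> x; rewrite in_setE => Sx; rewrite /l'aug (Huniq _ _ Ji Sx).
  rewrite integral_cst ?HSm //.
  rewrite [X in (_ * X <= _)%E](_ : _ = (pk i)%:E); last exact: Pfin.
  rewrite -EFinM.
  case: (eqVneq (pk i) 0) => [->|pne0].
    by rewrite mulr0; apply: integral_ge0 => x _; rewrite lee_fin sqr_ge0.
  have key : (\int[P]_(x in Sj i) ((2 * a i)%:E * (g x)%:E)
      <= \int[P]_(x in Sj i) ((a i ^+ 2)%:E + (l' x ^+ 2)%:E))%E.
    apply: ge0_le_integral => //.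
    - exact: HSm.
    - by move=> x _; rewrite -EFinM lee_fin; apply: mulr_ge0; [apply: mulr_ge0 | exact: normr_ge0].
    - by apply: measurable_funeM; apply: measurable_funS mgE.
    - by apply: emeasurable_funD => //; apply: measurable_funS ml'2.
    - move=> x _; rewrite -EFinM -EFinD lee_fin /g.
      rewrite -(real_normK (num_real (l' x))).
      have := sqr_ge0 (a i - `|l' x|); nra.
  move: key; rewrite ge0_integralZl_EFin //; last by apply: mulr_ge0.
  rewrite ge0_integralD //.
  rewrite integral_cst; last exact: HSm.
  rewrite Gfin //.
  rewrite [X in (_ <= _ * X + _)%E -> _](_ : _ = (pk i)%:E); last exact: Pfin.
  rewrite -!EFinM.
  have Qge0 : (0 <= \int[P]_(x in Sj i) (l' x ^+ 2)%:E)%E.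
    by apply: integral_ge0 => x _; rewrite lee_fin sqr_ge0.
  move: Qge0; case: (\int[P]_(x in Sj i) (l' x ^+ 2)%:E)%E => [q| |] //.
  rewrite -EFinD !lee_fin => q0 key.
  have Ga : Gk i = a i * pk i by rewrite /a divfK.
  rewrite Ga in key; nra.
  by move=> _ _; rewrite leey.
  all: try by [exact: HSm Ji | move=> x _; rewrite lee_fin ?sqr_ge0 ?normr_ge0
     | apply: measurable_funS ml'2 | apply: measurable_funS mgE].

pose good := fun s => forall k, J k -> Sj k s -> (0 < P (Sj k))%E.
have aegood : {ae P, forall s, good s}.
  pose Nk := fun k => if `[< J k /\ P (Sj k) = 0 >] then Sj k else set0.
  apply: (negligibleS _ (negligible_bigcup (F := Nk) _)).
  - move=> s /= ngood.
    move/existsNP: ngood => [k /not_implyP [Jk /not_implyP [Sks nP]]].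
    exists k => //; rewrite /Nk asboolT //; split => //.
    apply/eqP; rewrite eq_le measure_ge0 andbT leNgt; exact/negP.
  - move=> k; rewrite /Nk; case: asboolP => [[Jk P0]|_]; last exact: negligible_set0.
    by exists (Sj k); split => //; exact: HSm.
apply: filterS aegood => s gs th1 th2 T1 T2 n1 n2.
have [Jk Sks] := Hkof s.
have Ppos := gs _ Jk Sks.
have E : forall th, Theta th -> l_aug PL (rim_aug xf yf mk) l s th =
    (((fine (P (Sj (kof s))))^-1)%:E * \int[P]_(x in Sj (kof s)) (l x th)%:E)%E.
  by move=> th Th; exact: (HScond _ Jk Ppos _ Sks (fun x => l x th) (Hl_int th Th)).
rewrite (E th1 T1) (E th2 T2).
set k := kof s.
have il : forall th, Theta th -> P.-integrable (Sj k) (EFin \o (fun x => l x th)).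
  by move=> th Th; apply: integrableS (Hl_int th Th) => //; exact: HSm.
have I : forall th, Theta th -> (\int[P]_(x in Sj k) (l x th)%:E)%E
    = (fine (\int[P]_(x in Sj k) (l x th)%:E))%:E.
  by move=> th Th; rewrite fineK //; exact: (integrable_fin_num (HSm _ Jk) (il th Th)).
pose en := enorm (th1 - th2).
have en0 : 0 <= en by rewrite /en /enorm sqrtr_ge0.
have key : (`| \int[P]_(x in Sj k) (l x th1)%:E - \int[P]_(x in Sj k) (l x th2)%:E |
    <= (Gk k * en)%:E)%E.
  have mB : measurable_fun (Sj k) (fun x => ((l x th1)%:E - (l x th2)%:E)%E).
    by apply: emeasurable_funB; exact: measurable_int (il _ _).
  rewrite -integralB_EFin; [|exact: HSm|exact: il|exact: il].
  apply: le_trans (le_abse_integral _ (HSm _ Jk) mB) _.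
  rewrite EFinM -Gfin // -ge0_integralZr //; last 3 first.
    - exact: HSm.
    - exact: measurable_funS mgE.
    - by move=> x _; rewrite lee_fin normr_ge0.
  apply: ae_ge0_le_integral => //.
  - exact: HSm.
  - by apply: measurableT_comp mB.
  - by move=> x _; rewrite -EFinM lee_fin; apply: mulr_ge0 => //; exact: normr_ge0.
  - by apply: emeasurable_funM => //; apply: measurable_funS mgE.
  apply: filterS ael' => x H Sx.
  rewrite -EFinB /= -EFinM lee_fin.
  apply: le_trans (H _ _ T1 T2 n1 n2) _.
  by apply: ler_wpM2r => //; exact: ler_norm.
rewrite (I th1 T1) (I th2 T2) in key *.
rewrite -!EFinM -EFinB /= lee_fin.
rewrite -EFinB /= lee_fin in key.
rewrite -mulrBr normrM ger0_norm; last by rewrite invr_ge0 fine_ge0 // measure_ge0.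
rewrite /l'aug /a -/k (mulrC (Gk k)) -mulrA.
apply: ler_wpM2l => //.
by rewrite invr_ge0 fine_ge0 // measure_ge0.
Qed.
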